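(* Let $A\in\mathbb{R}^{n\times n}$ be such that $\Lambda_1$ is complex and use the Euclidean norm (with induced spectral matrix norm). For $y_0\in\mathbb{R}^n$ with $w^{(1)}y_0\neq0$, $$a_{\min}(V_1,W_1)\le\mathrm{OT}(t,y_0)\le a_{\max}(V_1,W_1)\qquad\text{for all }t\in\mathbb{R},$$ where $a_{\min}(V_1,W_1)=\sqrt{\frac{(1+W_1)(1-V_1)}{2(1+V_1)}}$ if $V_1\le W_1$, $a_{\min}(V_1,W_1)=\sqrt{\frac{1-W_1}{2}}$ if $V_1\ge W_1$, and $a_{\max}(V_1,W_1)=\sqrt{\frac{(1+W_1)(1+V_1)}{2(1-V_1)}}$. Moreover, if $\gamma_1(\hat y_0)-\theta_1$ is an odd multiple of $\pi/2$, then $\min_{t\in\mathbb{R}}\mathrm{OT}(t,y_0)=a_{\min}(V_1,W_1)$ and $\max_{t\in\mathbb{R}}\mathrm{OT}(t,y_0)=a_{\max}(V_1,W_1)$.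
   Context: $\Lambda_1$ complex: the eigenvalues of $A$ with maximal real part are exactly a pair of simple complex conjugate eigenvalues $\lambda_1,\overline{\lambda_1}$, $\omega_1=\operatorname{Im}\lambda_1>0$. $w^{(1)}$ (row), $v^{(1)}$ (column) left/right eigenvectors for $\lambda_1$; $\hat w^{(1)}=w^{(1)}/\|w^{(1)}\|_2$, $\hat v^{(1)}=v^{(1)}/\|v^{(1)}\|_2$. $V_1=|(\hat v^{(1)})^T\hat v^{(1)}|$, $W_1=|\hat w^{(1)}(\hat w^{(1)})^T|$ ($^T$ without conjugation), both in $[0,1)$. Polar forms $\hat v^{(1)}_k=|\hat v^{(1)}_k|e^{\sqrt{-1}\alpha_{1k}}$, $\hat w^{(1)}_l=|\hat w^{(1)}_l|e^{\sqrt{-1}\beta_{1l}}$, $\hat w^{(1)}u=|\hat w^{(1)}u|e^{\sqrt{-1}\gamma_1(u)}$ for real $u$ with $w^{(1)}u\neq0$. $\hat y_0=y_0/\|y_0\|_2$. $\hat\Theta_1(t,u)=(|\hat v^{(1)}_k|\cos(\omega_1t+\alpha_{1k}+\gamma_1(u)))_{k}$, $\hat\Theta_1(t)=(|\hat v^{(1)}_k||\hat w^{(1)}_l|\cos(\omega_1t+\alpha_{1k}+\beta_{1l}))_{k,l}$, $\mathrm{OT}(t,y_0)=\|\hat\Theta_1(t)\|_2/\|\hat\Theta_1(t,\hat y_0)\|_2$. Let $R_1=\begin{bmatrix}\operatorname{Re}\hat w^{(1)}\\ \operatorname{Im}\hat w^{(1)}\end{bmatrix}\in\mathbb{R}^{2\times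 n}$ with largest singular value $\sigma_1$ and corresponding left singular vector $\alpha^{(1)}\in\mathbb{R}^2$; identifying $\mathbb{R}^2$ with $\mathbb{C}$, $\theta_1$ is the angle between the positive real axis and the vector $\sigma_1\alpha^{(1)}$ (the major semi-axis of the ellipse $\{\hat w^{(1)}u: u\in\mathbb{R}^n,\|u\|_2=1\}$ boundary). *)

(* Defs.v *)
From HB Require Import structures.
From mathcomp Require Import all_boot all_order all_algebra.
From mathcomp Require Import complex.
From mathcomp Require Import all_classical all_reals all_analysis.
Set Implicit Arguments. Unset Strict Implicit. Unset Printing Implicit Defensive.
Import Order.TTheory GRing.Theory Num.Theory.
Local Open Scope ring_scope.

Section Defs.
Variable R : realType.

Definition cmod (z : R[i]) : R := Num.sqrt (complex.Re z ^+ 2 + complex.Im z ^+ 2).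

Definition expi (th : R) : R[i] := Complex (cos th) (sin th).

Definition cplx_mx m n (M : 'M[R]_(m, n)) : 'M[R[i]]_(m, n) :=
  map_mx (fun x => Complex x 0) M.

Definition rnorm2 m n (x : 'M[R]_(m, n)) : R :=
  Num.sqrt (\sum_i \sum_j x i j ^+ 2).
Definition cnorm2 m n (x : 'M[R[i]]_(m, n)) : R :=
  Num.sqrt (\sum_i \sum_j cmod (x i j) ^+ 2).

Definition specnorm m n (M : 'M[R]_(m, n)) : R :=
  sup [set rnorm2 (M *m u) | u in [set u : 'cV[R]_n | rnorm2 u = 1]].

Definition is_eigenvalue n (A : 'M[R]_n) (mu : R[i]) : Prop :=
  root (char_poly (cplx_mx A)) mu.
Definition alg_mult n (A : 'M[R]_n) (mu : R[i]) : nat :=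
  mup mu (char_poly (cplx_mx A)).

Definition Lambda1_complex n (A : 'M[R]_n) (lam : R[i]) : Prop :=
  [/\ is_eigenvalue A lam, 0 < complex.Im lam,
      alg_mult A lam = 1%N, alg_mult A (conjc lam) = 1%N &
      forall mu, is_eigenvalue A mu ->
        complex.Re mu <= complex.Re lam /\ (complex.Re mu = complex.Re lam -> mu = lam \/ mu = conjc lam)].

Definition a_min (V W : R) : R :=
  if V <= W then Num.sqrt ((1 + W) * (1 - V) / (2 * (1 + V)))
  else Num.sqrt ((1 - W) / 2).

Definition a_max (V W : R) : R :=
  Num.sqrt ((1 + W) * (1 + V) / (2 * (1 - V))).

End Defs.

(* Main.v *)
Require Import Defs.
From HB Require Import structures.
From mathcomp Require Import all_boot all_order all_algebra.
From mathcomp Require Import complex.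
From mathcomp Require Import all_classical all_reals all_analysis.
From mathcomp Require Import ring lra.
Import Order.TTheory GRing.Theory Num.Theory.
Local Open Scope ring_scope.


Section H.
Variable R : realType.


Lemma sup_bounds (E : set R) L U : (forall e, E e -> e <= U) ->
  (exists2 e, E e & L <= e) -> L <= sup E <= U.
Proof.
move=> hU [e Ee hL]; apply/andP; split.
  apply: (le_trans hL); apply: sup_upper_bound => //; split; first by exists e.
  by exists U.
by apply: ge_sup; [exists e | ].
Qed.

Lemma Re_sum n (F : 'I_n -> R[i]) : complex.Re (\sum_i F i) = \sum_i complex.Re (F i).
Proof. by apply: (big_morph _ (fun x y => _) (erefl _)) => -[? ?] [? ?]. Qed.
Lemma Im_sum n (F : 'I_n -> R[i]) : complex.Im (\sum_i F i) = \sum_i complex.Im (F i).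
Proof. by apply: (big_morph _ (fun x y => _) (erefl _)) => -[? ?] [? ?]. Qed.

Lemma sum_comb3 n (F G H : 'I_n -> R) a b c :
  \sum_k (a * F k + b * G k + c * H k) = a * \sum_k F k + b * \sum_k G k + c * \sum_k H k.
Proof. by rewrite !big_split /= -!mulr_sumr. Qed.

Lemma lagrange_id n (f g : 'I_n -> R) :
  \sum_k \sum_l (f k * g l - f l * g k) ^+ 2 =
  2 * ((\sum_k f k ^+ 2) * (\sum_k g k ^+ 2) - (\sum_k f k * g k) ^+ 2).
Proof.
transitivity (\sum_k (f k ^+ 2 * \sum_l g l ^+ 2 + (f k * g k) * (- 2 * \sum_l (f l * g l))
   + g k ^+ 2 * \sum_l f l ^+ 2)).
  apply: eq_bigr => k _.
  rewrite !mulr_sumr -!big_split /=; apply: eq_bigr => l _; ring.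
rewrite !big_split /= -!mulr_suml; ring.
Qed.

Lemma cauchy_schwarz n (f g : 'I_n -> R) :
  (\sum_k f k * g k) ^+ 2 <= (\sum_k f k ^+ 2) * (\sum_k g k ^+ 2).
Proof.
have : 0 <= \sum_k \sum_l (f k * g l - f l * g k) ^+ 2.
  by apply: sumr_ge0 => k _; apply: sumr_ge0 => l _; apply: sqr_ge0.
rewrite lagrange_id; lra.
Qed.

Lemma quad_sum n (P Q : 'I_n -> R) x y :
  \sum_k (P k * x - Q k * y) ^+ 2 =
  x ^+ 2 * \sum_k P k ^+ 2 - 2 * x * y * \sum_k P k * Q k + y ^+ 2 * \sum_k Q k ^+ 2.
Proof.
transitivity (\sum_k (x ^+ 2 * P k ^+ 2 + (- 2 * x * y) * (P k * Q k) + y ^+ 2 * Q k ^+ 2)).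
  by apply: eq_bigr => k _; ring.
rewrite sum_comb3; ring.
Qed.


Lemma sq_le_abs (a b : R) : 0 <= b -> a ^+ 2 <= b ^+ 2 -> - b <= a <= b.
Proof. move=> hb h; apply/andP; split; nra. Qed.

Lemma F_bounds (pp pq qq V x y : R) : pp + qq = 1 ->
  V ^+ 2 = (pp - qq) ^+ 2 + (2 * pq) ^+ 2 -> 0 <= V ->
  (1 - V) * (x ^+ 2 + y ^+ 2) / 2 <= pp * x ^+ 2 - 2 * pq * x * y + qq * y ^+ 2
  <= (1 + V) * (x ^+ 2 + y ^+ 2) / 2.
Proof.
move=> h1 hV V0.
have eF : pp * x ^+ 2 - 2 * pq * x * y + qq * y ^+ 2 =
   ((x ^+ 2 + y ^+ 2) + ((pp - qq) * (x ^+ 2 - y ^+ 2) - (2 * pq) * (2 * x * y))) / 2.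
  have -> : qq = 1 - pp by lra.
  by field; lra.
have key : ((pp - qq) * (x ^+ 2 - y ^+ 2) - (2 * pq) * (2 * x * y)) ^+ 2 <= (V * (x ^+ 2 + y ^+ 2)) ^+ 2.
  have -> : (V * (x ^+ 2 + y ^+ 2)) ^+ 2 = ((pp - qq) * (x ^+ 2 - y ^+ 2) - (2 * pq) * (2 * x * y)) ^+ 2
     + ((pp - qq) * (2 * x * y) + (2 * pq) * (x ^+ 2 - y ^+ 2)) ^+ 2.
    rewrite exprMn hV; ring.
  rewrite lerDl; exact: sqr_ge0.
have := @sq_le_abs _ _ (mulr_ge0 V0 (addr_ge0 (sqr_ge0 x) (sqr_ge0 y))) key.
rewrite eF; move=> /andP[l r]; apply/andP; split; lra.
Qed.

Lemma ellipse_bound (c s l1 cc cd dd x y U : R) :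
  c ^+ 2 + s ^+ 2 = 1 -> cc + dd = 1 -> cc * c + cd * s = l1 * c ->
  cd * c + dd * s = l1 * s -> 1 / 2 <= l1 -> l1 < 1 -> 0 <= U ->
  (forall z1 z2, (z1 * x + z2 * y) ^+ 2 <= (z1 ^+ 2 * cc + 2 * z1 * z2 * cd + z2 ^+ 2 * dd) * U) ->
  x ^+ 2 + y ^+ 2 <= l1 * U.
Proof.
move=> hcs hcd e1 e2 hl1 hl1' hU hCS.
have l1p : 0 < l1 by lra.
have [l2 hl2] : exists l2, l2 = 1 - l1 by eexists.
have l2p : 0 < l2 by rewrite hl2; lra.
have l12 : l2 <= l1 by rewrite hl2; lra.
have e3 : cd * c - cc * s = - l2 * s.
  have -> : cc = 1 - dd by lra. rewrite hl2. move: e2. nra.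
have e4 : cd * (- s) + dd * c = l2 * c.
  have -> : dd = 1 - cc by lra. rewrite hl2. move: e1. nra.
have [p hp] : exists p, p = c * x + s * y by eexists.
have [q hq] : exists q, q = - s * x + c * y by eexists.
have [z1 hz1] : exists z1, z1 = c * p / l1 - s * q / l2 by eexists.
have [z2 hz2] : exists z2, z2 = s * p / l1 + c * q / l2 by eexists.
have l1n : l1 != 0 by lra.
have l2n : l2 != 0 by lra.
have E1 : cc * z1 + cd * z2 = x.
  have -> : cc * z1 + cd * z2 = p / l1 * (cc * c + cd * s) + q / l2 * (cd * c - cc * s).
    by rewrite hz1 hz2; field; rewrite ?l1n ?l2n.
  rewrite e1 e3 hp hq.
  have hh : (c ^+ 2 + s ^+ 2) * x = x by rewrite hcs mul1r.
  rewrite -[X in _ = X]hh.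
  by field; rewrite ?l1n ?l2n.
have E2 : cd * z1 + dd * z2 = y.
  have -> : cd * z1 + dd * z2 = p / l1 * (cd * c + dd * s) + q / l2 * (cd * (- s) + dd * c).
    by rewrite hz1 hz2; field; rewrite ?l1n ?l2n.
  rewrite e2 e4 hp hq.
  have hh : (c ^+ 2 + s ^+ 2) * y = y by rewrite hcs mul1r.
  rewrite -[X in _ = X]hh.
  by field; rewrite ?l1n ?l2n.
have [K hK] : exists K, K = p ^+ 2 / l1 + q ^+ 2 / l2 by eexists.
have EK : z1 * x + z2 * y = K.
  by rewrite hK hz1 hz2 hp hq; field; rewrite ?l1n ?l2n.
have EM : z1 ^+ 2 * cc + 2 * z1 * z2 * cd + z2 ^+ 2 * dd = K.
  have -> : z1 ^+ 2 * cc + 2 * z1 * z2 * cd + z2 ^+ 2 * dd =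
    z1 * (cc * z1 + cd * z2) + z2 * (cd * z1 + dd * z2) by ring.
  by rewrite E1 E2.
have := hCS z1 z2; rewrite EK EM => hKU.
have K0 : 0 <= K.
  by rewrite hK; apply: addr_ge0; apply: divr_ge0; rewrite ?sqr_ge0 //; lra.
have KU : K <= U by nra.
have pq : x ^+ 2 + y ^+ 2 = p ^+ 2 + q ^+ 2.
  have hh : (c ^+ 2 + s ^+ 2) * (x ^+ 2 + y ^+ 2) = x ^+ 2 + y ^+ 2 by rewrite hcs mul1r.
  rewrite -hh hp hq.
  ring.
have hK2 : p ^+ 2 + q ^+ 2 <= l1 * K.
  have -> : l1 * K = p ^+ 2 + l1 / l2 * q ^+ 2 by rewrite hK; field; rewrite ?l1n ?l2n.
  rewrite lerD2l; rewrite -{1}(mul1r (q ^+ 2)); apply: ler_wpM2r; first exact: sqr_ge0.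
  by rewrite ler_pdivlMr // mul1r.
rewrite pq; apply: (le_trans hK2); apply: ler_wpM2l; lra.
Qed.


Lemma sin_nat_pi (m : nat) : sin (m%:R * pi) = 0 :> R.
Proof.
elim: m => [|m IH]; first by rewrite mul0r sin0.
by rewrite -natr1 mulrDl mul1r sinDpi IH oppr0.
Qed.

Lemma sin_int_pi (k : int) : sin (k%:~R * pi) = 0 :> R.
Proof.
case: k => m; first by rewrite -pmulrn sin_nat_pi.
by rewrite NegzE mulrNz mulNr sinN -pmulrn sin_nat_pi oppr0.
Qed.

Lemma cos_odd_pihalf (k : int) : cos ((2 * k + 1)%:~R * (pi / 2)) = 0 :> R.
Proof.
have -> : (2 * k + 1)%:~R * (pi / 2) = k%:~R * pi + pi / 2 :> R.
  by rewrite intrD intrM /=; field.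
by rewrite cosDpihalf sin_int_pi oppr0.
Qed.

Lemma angle_exists (X Y : R) : X ^+ 2 + Y ^+ 2 = 1 ->
  exists psi, cos psi = X /\ sin psi = Y.
Proof.
move=> h.
have hX : -1 <= X <= 1 by apply/andP; split; nra.
have cX : cos (acos X) = X by apply: acosK; rewrite in_itv /=.
have sX : sin (acos X) = `|Y|.
  by rewrite sin_acos // -sqrtr_sqr; congr Num.sqrt; lra.
case: (lerP 0 Y) => hY.
  by exists (acos X); rewrite cX sX ger0_norm.
by exists (- acos X); rewrite cosN sinN cX sX ltr0_norm ?opprK.
Qed.
End H.


Section H2.
Variable R : realType.

Definition Fq (pp pq qq x y : R) := pp * x ^+ 2 - 2 * pq * x * y + qq * y ^+ 2.

Lemma FqZ pp pq qq x y k : Fq pp pq qq (k * x) (k * y) = k ^+ 2 * Fq pp pq qq x y.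
Proof. rewrite /Fq; ring. Qed.

Section Minv.
Variables (c s l1 cc cd dd X Y : R).
Hypotheses (hcs : c ^+ 2 + s ^+ 2 = 1) (hcd : cc + dd = 1)
  (e1 : cc * c + cd * s = l1 * c) (e2 : cd * c + dd * s = l1 * s)
  (l1p : 0 < l1) (l1' : l1 < 1).

Ltac cp := have hcs' := hcs; have hcd' := hcd; have e1' := e1; have e2' := e2; have l1p' := l1p; have l1'' := l1'.
Local Notation l2 := (1 - l1).
Local Notation p := (c * X + s * Y).
Local Notation q := (- s * X + c * Y).
Definition mz1 := c * p / l1 - s * q / l2.
Definition mz2 := s * p / l1 + c * q / l2.

Lemma minv_e3 : cd * c - cc * s = - l2 * s.
Proof. cp. have -> : cc = 1 - dd by lra. move: e2. nra. Qed.
Lemma minv_e4 : cd * (- s) + dd * c = l2 * c.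
Proof. cp. have -> : dd = 1 - cc by lra. move: e1. nra. Qed.

Lemma minv_E1 : cc * mz1 + cd * mz2 = X.
Proof. cp.
have l1n : l1 != 0 by lra.
have l2n : l2 != 0 by lra.
have -> : cc * mz1 + cd * mz2 = p / l1 * (cc * c + cd * s) + q / l2 * (cd * c - cc * s).
  by rewrite /mz1 /mz2; field; rewrite ?l1n ?l2n.
rewrite e1 minv_e3.
have hh : (c ^+ 2 + s ^+ 2) * X = X by rewrite hcs mul1r.
rewrite -[X in _ = X]hh.
by field; rewrite ?l1n ?l2n.
Qed.

Lemma minv_E2 : cd * mz1 + dd * mz2 = Y.
Proof. cp.
have l1n : l1 != 0 by lra.
have l2n : l2 != 0 by lra.
have -> : cd * mz1 + dd * mz2 = p / l1 * (cd * c + dd * s) + q / l2 * (cd * (- s) + dd * c).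
  by rewrite /mz1 /mz2; field; rewrite ?l1n ?l2n.
rewrite e2 minv_e4.
have hh : (c ^+ 2 + s ^+ 2) * Y = Y by rewrite hcs mul1r.
rewrite -[X in _ = X]hh.
by field; rewrite ?l1n ?l2n.
Qed.

Lemma minv_EK : mz1 * X + mz2 * Y = p ^+ 2 / l1 + q ^+ 2 / l2.
Proof. cp.
have l1n : l1 != 0 by lra.
have l2n : l2 != 0 by lra.
by rewrite /mz1 /mz2; field; rewrite ?l1n ?l2n.
Qed.

Lemma minv_EM : mz1 ^+ 2 * cc + 2 * mz1 * mz2 * cd + mz2 ^+ 2 * dd = p ^+ 2 / l1 + q ^+ 2 / l2.
Proof. cp.
rewrite -minv_EK.
have -> : mz1 ^+ 2 * cc + 2 * mz1 * mz2 * cd + mz2 ^+ 2 * dd =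
    mz1 * (cc * mz1 + cd * mz2) + mz2 * (cd * mz1 + dd * mz2) by ring.
by rewrite minv_E1 minv_E2.
Qed.

Lemma pq_norm : X ^+ 2 + Y ^+ 2 = p ^+ 2 + q ^+ 2.
Proof. cp.
have hh : (c ^+ 2 + s ^+ 2) * (X ^+ 2 + Y ^+ 2) = X ^+ 2 + Y ^+ 2 by rewrite hcs mul1r.
rewrite -hh; ring.
Qed.

End Minv.


Lemma ellipse_K (c s l1 cc cd dd x y U : R) :
  c ^+ 2 + s ^+ 2 = 1 -> cc + dd = 1 -> cc * c + cd * s = l1 * c ->
  cd * c + dd * s = l1 * s -> 0 < l1 -> l1 < 1 -> 0 <= U ->
  (forall z1 z2, (z1 * x + z2 * y) ^+ 2 <= (z1 ^+ 2 * cc + 2 * z1 * z2 * cd + z2 ^+ 2 * dd) * U) ->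
  (c * x + s * y) ^+ 2 / l1 + (- s * x + c * y) ^+ 2 / (1 - l1) <= U.
Proof.
move=> hcs hcd e1 e2 l1p l1' hU hCS.
have := hCS (mz1 c s l1 x y) (mz2 c s l1 x y).
rewrite (minv_EK c s l1 cc cd dd x y hcs hcd e1 e2 l1p l1') (minv_EM c s l1 cc cd dd x y hcs hcd e1 e2 l1p l1').
set K := _ + _ => hKU.
have K0 : 0 <= K.
  by rewrite /K; apply: addr_ge0; apply: divr_ge0; rewrite ?sqr_ge0 //; lra.
nra.
Qed.
End H2.
Arguments Fq {R}.


Section H3.
Variable R : realType.

Lemma rnorm2_col n (u : 'cV[R]_n) : rnorm2 u = Num.sqrt (\sum_k u k ord0 ^+ 2).
Proof. rewrite /rnorm2; congr Num.sqrt; apply: eq_bigr => k _; by rewrite big_ord1. Qed.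

Lemma sqrt_eq1 (S : R) : 0 <= S -> Num.sqrt S = 1 -> S = 1.
Proof. by move=> hS h; rewrite -(sqr_sqrtr hS) h expr1n. Qed.

Lemma Th_norm n (P Q c d : 'I_n -> R) (Th : 'M[R]_n) (u : 'cV[R]_n) :
  (forall k l, Th k l = P k * c l - Q k * d l) ->
  rnorm2 (Th *m u) = Num.sqrt (Fq (\sum_k P k ^+ 2) (\sum_k P k * Q k) (\sum_k Q k ^+ 2)
      (\sum_l c l * u l ord0) (\sum_l d l * u l ord0)).
Proof.
move=> hT; rewrite rnorm2_col; congr Num.sqrt.
transitivity (\sum_k (P k * (\sum_l c l * u l ord0) - Q k * (\sum_l d l * u l ord0)) ^+ 2).
  apply: eq_bigr => k _; rewrite !mxE; congr (_ ^+ 2).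
  rewrite !mulr_sumr -sumrB; apply: eq_bigr => l _; rewrite hT; ring.
by rewrite quad_sum /Fq; ring.
Qed.

Lemma unit_vec n (c d : 'I_n -> R) z1 z2 :
  0 < z1 ^+ 2 * (\sum_l c l ^+ 2) + 2 * z1 * z2 * (\sum_l c l * d l) + z2 ^+ 2 * (\sum_l d l ^+ 2) ->
  exists u : 'cV[R]_n, [/\ rnorm2 u = 1,
    \sum_l c l * u l ord0 = (z1 * (\sum_l c l ^+ 2) + z2 * (\sum_l c l * d l)) /
       Num.sqrt (z1 ^+ 2 * (\sum_l c l ^+ 2) + 2 * z1 * z2 * (\sum_l c l * d l) + z2 ^+ 2 * (\sum_l d l ^+ 2)) &
    \sum_l d l * u l ord0 = (z1 * (\sum_l c l * d l) + z2 * (\sum_l d l ^+ 2)) /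
       Num.sqrt (z1 ^+ 2 * (\sum_l c l ^+ 2) + 2 * z1 * z2 * (\sum_l c l * d l) + z2 ^+ 2 * (\sum_l d l ^+ 2))].
Proof.
set N := _ + _ + _ => hN.
have sN : 0 < Num.sqrt N by rewrite sqrtr_gt0.
have sNn : Num.sqrt N != 0 by rewrite gt_eqF.
exists (\col_l ((Num.sqrt N)^-1 * (z1 * c l + z2 * d l))); split.
- rewrite rnorm2_col.
  transitivity (Num.sqrt ((Num.sqrt N)^-1 ^+ 2 * N)).
    congr Num.sqrt; rewrite /N.
    transitivity (\sum_l ((Num.sqrt N)^-1 ^+ 2 * z1 ^+ 2 * c l ^+ 2 +
       (Num.sqrt N)^-1 ^+ 2 * 2 * z1 * z2 * (c l * d l) + (Num.sqrt N)^-1 ^+ 2 * z2 ^+ 2 * d l ^+ 2)).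
      by apply: eq_bigr => l _; rewrite mxE; ring.
    rewrite !big_split /= -!mulr_sumr; ring.
  by rewrite exprVn sqr_sqrtr ?mulVf ?sqrtr1 // ?gt_eqF // ltW.
- transitivity (\sum_l ((Num.sqrt N)^-1 * z1 * c l ^+ 2 + (Num.sqrt N)^-1 * z2 * (c l * d l))).
    by apply: eq_bigr => l _; rewrite mxE; ring.
  by rewrite big_split /= -!mulr_sumr; field; rewrite ?sNn.
- transitivity (\sum_l ((Num.sqrt N)^-1 * z1 * (c l * d l) + (Num.sqrt N)^-1 * z2 * d l ^+ 2)).
    by apply: eq_bigr => l _; rewrite mxE; ring.
  by rewrite big_split /= -!mulr_sumr; field; rewrite ?sNn.
Qed.

Lemma CS_unit n (c d : 'I_n -> R) (u : 'cV[R]_n) : rnorm2 u = 1 -> forall z1 z2,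
  (z1 * (\sum_l c l * u l ord0) + z2 * (\sum_l d l * u l ord0)) ^+ 2 <=
  (z1 ^+ 2 * (\sum_l c l ^+ 2) + 2 * z1 * z2 * (\sum_l c l * d l) + z2 ^+ 2 * (\sum_l d l ^+ 2)) * 1.
Proof.
move=> hu z1 z2.
have hu1 : \sum_l u l ord0 ^+ 2 = 1.
  by apply: sqrt_eq1; [apply: sumr_ge0 => l _; apply: sqr_ge0 | rewrite -rnorm2_col].
have := @cauchy_schwarz _ _ (fun l => z1 * c l + z2 * d l) (fun l => u l ord0).
rewrite hu1.
have -> : \sum_k (z1 * c k + z2 * d k) * u k ord0 =
   z1 * (\sum_l c l * u l ord0) + z2 * (\sum_l d l * u l ord0).
  by rewrite !mulr_sumr -big_split; apply: eq_bigr => l _ /=; ring.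
have -> : \sum_k (z1 * c k + z2 * d k) ^+ 2 =
   z1 ^+ 2 * (\sum_l c l ^+ 2) + 2 * z1 * z2 * (\sum_l c l * d l) + z2 ^+ 2 * (\sum_l d l ^+ 2).
  transitivity (\sum_k (z1 ^+ 2 * c k ^+ 2 + (2 * z1 * z2) * (c k * d k) + z2 ^+ 2 * d k ^+ 2)).
    by apply: eq_bigr => l _; ring.
  by rewrite sum_comb3.
done.
Qed.
End H3.


Section H4.
Variable R : realType.

Lemma specnorm_bounds m n (M : 'M[R]_(m, n)) L Ub :
  (forall u : 'cV[R]_n, rnorm2 u = 1 -> rnorm2 (M *m u) <= Ub) ->
  (exists u : 'cV[R]_n, rnorm2 u = 1 /\ L <= rnorm2 (M *m u)) -> L <= specnorm M <= Ub.
Proof.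
rewrite /specnorm => h1 [u [hu hL]]; apply: sup_bounds.
  by move=> e [v hv <-]; exact: h1.
by exists (rnorm2 (M *m u)); [exists u|].
Qed.

Variables (n : nat) (c d P Q : 'I_n -> R) (Th : 'M[R]_n) (th l1 V W : R)
  (cc cd dd pp pq qq : R).
Hypotheses (hcc : cc = \sum_l c l ^+ 2) (hcd : cd = \sum_l c l * d l) (hdd : dd = \sum_l d l ^+ 2)
  (hpp : pp = \sum_k P k ^+ 2) (hpq : pq = \sum_k P k * Q k) (hqq : qq = \sum_k Q k ^+ 2)
  (hccdd : cc + dd = 1) (W0 : 0 <= W) (W1 : W < 1) (hl1 : l1 = (1 + W) / 2)
  (e1 : cc * cos th + cd * sin th = l1 * cos th) (e2 : cd * cos th + dd * sin th = l1 * sin th)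
  (hppqq : pp + qq = 1) (hV : V ^+ 2 = (pp - qq) ^+ 2 + (2 * pq) ^+ 2) (V0 : 0 <= V) (V1 : V < 1)
  (hT : forall k l, Th k l = P k * c l - Q k * d l).

Ltac cp2 := have hccdd' := hccdd; have W0' := W0; have W1' := W1; have hl1' := hl1;
  have e1' := e1; have e2' := e2; have hppqq' := hppqq; have hV' := hV; have V0' := V0;
  have V1' := V1; have cs1 := cos2Dsin2 th.

Lemma upper_each (u : 'cV[R]_n) : rnorm2 u = 1 ->
  rnorm2 (Th *m u) <= Num.sqrt (l1 * (1 + V) / 2).
Proof.
cp2 => hu.
rewrite (@Th_norm _ _ P Q c d Th u hT) -hpp -hpq -hqq.
have hCS := @CS_unit _ _ c d u hu; rewrite -hcc -hcd -hdd in hCS.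
have hxy := @ellipse_bound _ _ _ _ _ _ _ _ _ _ cs1 hccdd e1 e2 ltac:(lra) ltac:(lra) ler01 hCS.
move: hxy; set x := \sum_l _; set y := \sum_l _ => hxy.
have := @F_bounds _ pp pq qq V x y hppqq hV V0; rewrite /Fq => /andP[_ h].
rewrite ler_sqrt; last by apply: divr_ge0; [apply: mulr_ge0|]; lra.
apply: (le_trans h); rewrite ler_pM2r ?invr_gt0 //; rewrite mulr1 in hxy; nra.
Qed.

Lemma witness_e1 : exists u : 'cV[R]_n, rnorm2 u = 1 /\
  rnorm2 (Th *m u) = Num.sqrt (l1 * Fq pp pq qq (cos th) (sin th)).
Proof.
cp2.
have hN : cos th ^+ 2 * cc + 2 * cos th * sin th * cd + sin th ^+ 2 * dd = l1.
  have -> : cos th ^+ 2 * cc + 2 * cos th * sin th * cd + sin th ^+ 2 * dd =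
    cos th * (cc * cos th + cd * sin th) + sin th * (cd * cos th + dd * sin th) by ring.
  rewrite e1 e2 -[RHS]mulr1 -cs1; ring.
have l1p : 0 < l1 by lra.
have := @unit_vec _ n c d (cos th) (sin th); rewrite -hcc -hcd -hdd hN => /(_ l1p).
case=> u [hu hx hy]; exists u; split => //.
have ex : cos th * cc + sin th * cd = l1 * cos th by rewrite -e1; ring.
have ey : cos th * cd + sin th * dd = l1 * sin th by rewrite -e2; ring.
rewrite (@Th_norm _ _ P Q c d Th u hT) -hpp -hpq -hqq hx hy ex ey.
rewrite (mulrAC l1 (cos th)) (mulrAC l1 (sin th)).
rewrite FqZ; congr (Num.sqrt (_ * _)).
rewrite expr_div_n sqr_sqrtr ?ltW // expr2 mulfK // gt_eqF //.
Qed.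

Lemma K0_bounds (P2 Q2 : R) : 0 <= P2 -> 0 <= Q2 -> P2 + Q2 = 1 -> 1 / 2 <= l1 -> l1 < 1 ->
  1 <= P2 / l1 + Q2 / (1 - l1) /\ (1 - l1) * (P2 / l1 + Q2 / (1 - l1)) <= 1.
Proof.
move=> hP hQ hs h1 h2.
have l1p : 0 < l1 by lra.
have l2p : 0 < 1 - l1 by lra.
split.
  have a : P2 <= P2 / l1 by rewrite ler_pdivlMr //; nra.
  have b : Q2 <= Q2 / (1 - l1) by rewrite ler_pdivlMr //; nra.
  lra.
have -> : (1 - l1) * (P2 / l1 + Q2 / (1 - l1)) = (1 - l1) / l1 * P2 + Q2.
  by field; rewrite ?gt_eqF.
have : (1 - l1) / l1 <= 1 by rewrite ler_pdivrMr //; lra.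
nra.
Qed.

Lemma D_bounds g : (1 - V) / 2 <= Fq pp pq qq (cos g) (sin g) <= (1 + V) / 2.
Proof.
have := @F_bounds _ pp pq qq V (cos g) (sin g) hppqq hV V0.
by rewrite cos2Dsin2 !mulr1.
Qed.

Lemma witness_g g : exists u : 'cV[R]_n, rnorm2 u = 1 /\
  Num.sqrt ((1 - l1) * Fq pp pq qq (cos g) (sin g)) <= rnorm2 (Th *m u).
Proof.
cp2.
have l1p : 0 < l1 by lra.
have l1lt : l1 < 1 by lra.
have hE1 := @minv_E1 _ (cos th) (sin th) l1 cc cd dd (cos g) (sin g) cs1 hccdd e1 e2 l1p l1lt.
have hE2 := @minv_E2 _ (cos th) (sin th) l1 cc cd dd (cos g) (sin g) cs1 hccdd e1 e2 l1p l1lt.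
have hEM := @minv_EM _ (cos th) (sin th) l1 cc cd dd (cos g) (sin g) cs1 hccdd e1 e2 l1p l1lt.
have hpqn := @pq_norm _ (cos th) (sin th) l1 cc cd dd (cos g) (sin g) cs1 hccdd e1 e2 l1p l1lt.
rewrite cos2Dsin2 in hpqn.
move: hE1 hE2 hEM hpqn.
set z1 := mz1 _ _ _ _ _ _; set z2 := mz2 _ _ _ _ _ _.
set p0 := _ * cos g + _; set q0 := _ * cos g + _ => hE1 hE2 hEM hpqn.
have [K1 K2] := @K0_bounds _ _ (sqr_ge0 p0) (sqr_ge0 q0) (esym hpqn) ltac:(lra) l1lt.
move: hEM K1 K2; set K0 := p0 ^+ 2 / l1 + _ => hEM K1 K2.
have K0p : 0 < K0 by lra.
have := @unit_vec _ n c d z1 z2; rewrite -hcc -hcd -hdd hEM => /(_ K0p).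
case=> u [hu hx hy]; exists u; split => //.
rewrite (@Th_norm _ _ P Q c d Th u hT) -hpp -hpq -hqq hx hy.
have -> : z1 * cc + z2 * cd = cos g by rewrite -hE1; ring.
have -> : z1 * cd + z2 * dd = sin g by rewrite -hE2; ring.
rewrite (mulrC (cos g)) (mulrC (sin g)) FqZ.
have hD := D_bounds g.
rewrite ler_sqrt; last by apply: mulr_ge0; [apply: sqr_ge0 | lra].
rewrite exprVn (sqr_sqrtr (ltW K0p)).
have hK : (1 - l1) <= K0^-1 by rewrite -(ler_pM2r K0p) mulVf ?gt_eqF.
move: hD => /andP[hD1 _].
have hF0 : 0 <= Fq pp pq qq (cos g) (sin g) by lra.
exact: (ler_wpM2r hF0 hK).
Qed.

Lemma amax_sqrtD g : a_max V W * Num.sqrt (Fq pp pq qq (cos g) (sin g)) =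
  Num.sqrt ((1 + W) * (1 + V) / (2 * (1 - V)) * Fq pp pq qq (cos g) (sin g)).
Proof.
cp2.
have h0 : 0 <= (1 + W) * (1 + V) / (2 * (1 - V)) by apply: divr_ge0; apply: mulr_ge0; lra.
by rewrite /a_max [RHS]sqrtrM.
Qed.

Lemma MA g : a_min V W * Num.sqrt (Fq pp pq qq (cos g) (sin g)) <= specnorm Th <=
  a_max V W * Num.sqrt (Fq pp pq qq (cos g) (sin g)).
Proof.
cp2.
have /andP[hD1 hD2] := D_bounds g.
rewrite /specnorm; apply: sup_bounds.
  move=> e [u hu <-]; apply: (le_trans (upper_each _ hu)).
  rewrite amax_sqrtD ler_sqrt; last first.
    apply: mulr_ge0; last lra.
    by apply: divr_ge0; apply: mulr_ge0; lra.
  have -> : l1 * (1 + V) / 2 = (1 + W) * (1 + V) / (2 * (1 - V)) * ((1 - V) / 2).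
    by rewrite hl1; field; lra.
  by apply: ler_wpM2l => //; apply: divr_ge0; apply: mulr_ge0; lra.
rewrite /a_min; case: ifP => hVW.
  have [u [hu hN]] := witness_e1.
  exists (rnorm2 (Th *m u)); first by exists u.
  have /andP[ht1 _] := D_bounds th.
  rewrite hN -sqrtrM; last by apply: divr_ge0; apply: mulr_ge0; lra.
  rewrite ler_sqrt; last by apply: mulr_ge0; lra.
  apply: (@le_trans _ _ ((1 + W) * (1 - V) / (2 * (1 + V)) * ((1 + V) / 2))).
    by apply: ler_wpM2l => //; apply: divr_ge0; apply: mulr_ge0; lra.
  have -> : (1 + W) * (1 - V) / (2 * (1 + V)) * ((1 + V) / 2) = l1 * ((1 - V) / 2).
    by rewrite hl1; field; lra.
  by apply: ler_wpM2l => //; lra.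
have [u [hu hN]] := witness_g g.
exists (rnorm2 (Th *m u)); first by exists u.
rewrite -sqrtrM; last lra.
by have -> : (1 - W) / 2 = 1 - l1 by rewrite hl1; field.
Qed.

Local Notation cth := (cos th).
Local Notation sth := (sin th).
Local Notation S1 := ((pp - qq) * (cth ^+ 2 - sth ^+ 2) - 2 * cth * sth * (2 * pq)).
Local Notation S2 := (2 * cth * sth * (pp - qq) + (cth ^+ 2 - sth ^+ 2) * (2 * pq)).

Lemma Fq_rot x y : Fq pp pq qq x y =
  (((cth * x + sth * y) ^+ 2 + (- sth * x + cth * y) ^+ 2)
   + S1 * ((cth * x + sth * y) ^+ 2 - (- sth * x + cth * y) ^+ 2)
   - 2 * S2 * (cth * x + sth * y) * (- sth * x + cth * y)) / 2.
Proof.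
cp2.
have gen : forall p q, Fq pp pq qq (cth * p - sth * q) (sth * p + cth * q) =
  ((cth ^+ 2 + sth ^+ 2) * (p ^+ 2 + q ^+ 2) + S1 * (p ^+ 2 - q ^+ 2) - 2 * S2 * p * q) / 2.
  move=> p q; rewrite /Fq; have -> : qq = 1 - pp by lra.
  by field.
have hx : cth * (cth * x + sth * y) - sth * (- sth * x + cth * y) = x.
  by rewrite -[RHS]mul1r -cs1; ring.
have hy : sth * (cth * x + sth * y) + cth * (- sth * x + cth * y) = y.
  by rewrite -[RHS]mul1r -cs1; ring.
by have := gen (cth * x + sth * y) (- sth * x + cth * y); rewrite hx hy cs1 mul1r.
Qed.

Lemma S12 : S1 ^+ 2 + S2 ^+ 2 = V ^+ 2.
Proof.
cp2.
have -> : S1 ^+ 2 + S2 ^+ 2 = ((pp - qq) ^+ 2 + (2 * pq) ^+ 2) * (cth ^+ 2 + sth ^+ 2) ^+ 2 by ring.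
by rewrite cs1 expr1n mulr1 hV.
Qed.

Lemma D_special g : cth * cos g + sth * sin g = 0 ->
  Fq pp pq qq (cos g) (sin g) = (1 - S1) / 2.
Proof.
cp2 => hp0.
have hq : (- sth * cos g + cth * sin g) ^+ 2 = 1.
  have := cos2Dsin2 g.
  have h : (cth * cos g + sth * sin g) ^+ 2 + (- sth * cos g + cth * sin g) ^+ 2
     = (cos g ^+ 2 + sin g ^+ 2) * (cth ^+ 2 + sth ^+ 2) by ring.
  by move: h; rewrite cs1 mulr1 hp0 expr0n /= add0r => ->.
by rewrite Fq_rot hp0 hq; field.
Qed.

Lemma Fq_e1 : Fq pp pq qq cth sth = (1 + S1) / 2.
Proof.
cp2.
rewrite Fq_rot.
have -> : cth * cth + sth * sth = 1 by rewrite -cs1 !expr2.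
have -> : - sth * cth + cth * sth = 0 by ring.
by field.
Qed.

Lemma MS_max g : cth * cos g + sth * sin g = 0 -> S1 = V ->
  a_max V W * Num.sqrt (Fq pp pq qq (cos g) (sin g)) <= specnorm Th.
Proof.
cp2 => hp0 hS.
have [u [hu hN]] := witness_e1.
have hL : a_max V W * Num.sqrt (Fq pp pq qq (cos g) (sin g)) = rnorm2 (Th *m u).
  rewrite amax_sqrtD hN Fq_e1 D_special // hS; congr Num.sqrt.
  by rewrite hl1; field; lra.
have := @specnorm_bounds _ _ Th (a_max V W * Num.sqrt (Fq pp pq qq (cos g) (sin g)))
   (Num.sqrt (l1 * (1 + V) / 2)) upper_each.
by case/(_ _)/andP => //; exists u; split => //; rewrite hL.
Qed.

Lemma MS_min g : cth * cos g + sth * sin g = 0 -> S1 = - V ->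
  specnorm Th <= a_min V W * Num.sqrt (Fq pp pq qq (cos g) (sin g)).
Proof.
cp2 => hp0 hS.
have hS2 : S2 = 0.
  have := S12; rewrite hS sqrrN => /eqP; rewrite -subr_eq0 addrC addKr sqrf_eq0.
  by move/eqP.
have l1p : 0 < l1 by lra.
have l1lt : l1 < 1 by lra.
have [u [hu hN]] := witness_e1.
have hamn : 0 <= (if V <= W then (1 + W) * (1 - V) / (2 * (1 + V)) else (1 - W) / 2).
  by case: ifP => _; [apply: divr_ge0; apply: mulr_ge0|apply: divr_ge0]; lra.
have hD := D_special _ hp0; rewrite hS opprK in hD.
have hR : a_min V W * Num.sqrt (Fq pp pq qq (cos g) (sin g)) =
    Num.sqrt ((if V <= W then (1 + W) * (1 - V) / (2 * (1 + V)) else (1 - W) / 2) * ((1 + V) / 2)).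
  rewrite /a_min hD; case: ifP => h; rewrite -sqrtrM //.
    by apply: divr_ge0; [apply: mulr_ge0|]; lra.
  by apply: divr_ge0; lra.
have hUB : forall v : 'cV[R]_n, rnorm2 v = 1 ->
    rnorm2 (Th *m v) <= a_min V W * Num.sqrt (Fq pp pq qq (cos g) (sin g)).
  move=> v hv; rewrite hR (@Th_norm _ _ P Q c d Th v hT) -hpp -hpq -hqq.
  have hCS := @CS_unit _ _ c d v hv; rewrite -hcc -hcd -hdd in hCS.
  have hK := @ellipse_K _ _ _ _ _ _ _ _ _ _ cs1 hccdd e1 e2 l1p l1lt ler01 hCS.
  move: hK; set x := \sum_l _; set y := \sum_l _.
  rewrite Fq_rot hS hS2.
  set p := cth * x + _; set q := - sth * x + _ => hK.
  rewrite ler_sqrt; last by apply: mulr_ge0 => //; lra.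
  have hP2 : p ^+ 2 = l1 * (p ^+ 2 / l1) by field; lra.
  have hQ2 : q ^+ 2 = (1 - l1) * (q ^+ 2 / (1 - l1)) by field; lra.
  have P20 : 0 <= p ^+ 2 / l1 by apply: divr_ge0; [apply: sqr_ge0 | lra].
  have Q20 : 0 <= q ^+ 2 / (1 - l1) by apply: divr_ge0; [apply: sqr_ge0 | lra].
  move: hK P20 Q20 hP2 hQ2.
  set P2 := p ^+ 2 / l1; set Q2 := q ^+ 2 / (1 - l1) => hK P20 Q20 hP2 hQ2.
  have -> : (p ^+ 2 + q ^+ 2 + - V * (p ^+ 2 - q ^+ 2) - 2 * 0 * p * q) / 2 =
     ((1 - V) * l1 * P2 + (1 + V) * (1 - l1) * Q2) / 2.
    by rewrite hP2 hQ2; field.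
  case: ifP => hVW.
    have hAB : (1 + V) * (1 - l1) <= (1 - V) * l1 by rewrite hl1; lra.
    have -> : (1 + W) * (1 - V) / (2 * (1 + V)) * ((1 + V) / 2) = (1 - V) * l1 / 2.
      by rewrite hl1; field; lra.
    rewrite ler_pM2r; last by [].
    have h1 : (1 + V) * (1 - l1) * Q2 <= (1 - V) * l1 * Q2 by apply: ler_wpM2r.
    have h2 : (1 - V) * l1 * (P2 + Q2) <= (1 - V) * l1 by apply: ler_piMr; [apply: mulr_ge0|]; lra.
    lra.
  have hAB : (1 - V) * l1 <= (1 + V) * (1 - l1).
    by rewrite hl1; move/negbT: hVW; rewrite -ltNge => ?; lra.
  have -> : (1 - W) / 2 * ((1 + V) / 2) = (1 + V) * (1 - l1) / 2.
    by rewrite hl1; field.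
  rewrite ler_pM2r; last by [].
  have h1 : (1 - V) * l1 * P2 <= (1 + V) * (1 - l1) * P2 by apply: ler_wpM2r.
  have h2 : (1 + V) * (1 - l1) * (P2 + Q2) <= (1 + V) * (1 - l1).
    by apply: ler_piMr; [apply: mulr_ge0|]; lra.
  lra.
have := @specnorm_bounds _ _ Th 0 _ hUB.
by case/(_ _)/andP => //; exists u; split => //; rewrite hN sqrtr_ge0.
Qed.
End H4.


Section H5.
Variable R : realType.

Lemma ReCmul (r : R) (z : R[i]) : complex.Re (Complex r 0 * z) = r * complex.Re z.
Proof. by case: z => x y /=; rewrite mul0r subr0. Qed.
Lemma ImCmul (r : R) (z : R[i]) : complex.Im (Complex r 0 * z) = r * complex.Im z.
Proof. by case: z => x y /=; rewrite mul0r addr0. Qed.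
Lemma ReCmulr (r : R) (z : R[i]) : complex.Re (z * Complex r 0) = complex.Re z * r.
Proof. by case: z => x y /=; rewrite mulr0 subr0. Qed.
Lemma ImCmulr (r : R) (z : R[i]) : complex.Im (z * Complex r 0) = complex.Im z * r.
Proof. by case: z => x y /=; rewrite mulr0 add0r. Qed.

Lemma cmod_sq (z : R[i]) : cmod z ^+ 2 = complex.Re z ^+ 2 + complex.Im z ^+ 2.
Proof. by rewrite /cmod sqr_sqrtr // addr_ge0 // sqr_ge0. Qed.

Lemma nz_pos (z : R[i]) : z != 0 -> 0 < complex.Re z ^+ 2 + complex.Im z ^+ 2.
Proof.
case: z => x y hz.
have : (x != 0) || (y != 0).
  case: (eqVneq x 0) => hx //=; case: (eqVneq y 0) => hy //=.
  by move: hz; rewrite hx hy eqxx.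
case/orP => h /=.
  have : 0 < x ^+ 2 by rewrite lt_def sqrf_eq0 h sqr_ge0.
  have := sqr_ge0 y; lra.
have : 0 < y ^+ 2 by rewrite lt_def sqrf_eq0 h sqr_ge0.
have := sqr_ge0 x; lra.
Qed.

Lemma sum_pos n (f : 'I_n -> R[i]) k : f k != 0 ->
  0 < \sum_k (complex.Re (f k) ^+ 2 + complex.Im (f k) ^+ 2).
Proof.
move=> hk; rewrite (bigD1 k) //=.
have h1 := @nz_pos _ hk.
have h2 : 0 <= \sum_(i < n | i != k) (complex.Re (f i) ^+ 2 + complex.Im (f i) ^+ 2).
  by apply: sumr_ge0 => i _; apply: addr_ge0; apply: sqr_ge0.
lra.
Qed.

Lemma normalize n (f : 'I_n -> R[i]) (S : R) :
  S = \sum_k (complex.Re (f k) ^+ 2 + complex.Im (f k) ^+ 2) -> 0 < S ->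
  \sum_k (complex.Re (Complex (Num.sqrt S)^-1 0 * f k) ^+ 2 +
          complex.Im (Complex (Num.sqrt S)^-1 0 * f k) ^+ 2) = 1.
Proof.
move=> hS S0.
transitivity (\sum_k ((Num.sqrt S)^-1 ^+ 2 * (complex.Re (f k) ^+ 2 + complex.Im (f k) ^+ 2))).
  by apply: eq_bigr => k _; rewrite ReCmul ImCmul; ring.
by rewrite -mulr_sumr -hS exprVn sqr_sqrtr ?mulVf ?gt_eqF // ltW.
Qed.

Lemma cnorm2_col n (v : 'cV[R[i]]_n) :
  cnorm2 v = Num.sqrt (\sum_k (complex.Re (v k ord0) ^+ 2 + complex.Im (v k ord0) ^+ 2)).
Proof. rewrite /cnorm2; congr Num.sqrt; apply: eq_bigr => k _; by rewrite big_ord1 cmod_sq. Qed.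

Lemma cnorm2_row n (w : 'rV[R[i]]_n) :
  cnorm2 w = Num.sqrt (\sum_k (complex.Re (w ord0 k) ^+ 2 + complex.Im (w ord0 k) ^+ 2)).
Proof. rewrite /cnorm2 big_ord1; congr Num.sqrt; apply: eq_bigr => k _; by rewrite cmod_sq. Qed.

Lemma col_nz n (v : 'cV[R[i]]_n) : v != 0 -> exists k, v k ord0 != 0.
Proof.
move=> hv; case: (pselect (exists k, v k ord0 != 0)) => // h; exfalso.
move/eqP: hv; apply; apply/matrixP => i j; rewrite (ord1 j) mxE.
by apply/eqP; apply/negPn/negP => hne; apply: h; exists i.
Qed.

Lemma row_nz n (w : 'rV[R[i]]_n) : w != 0 -> exists k, w ord0 k != 0.
Proof.
move=> hv; case: (pselect (exists k, w ord0 k != 0)) => // h; exfalso.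
move/eqP: hv; apply; apply/matrixP => i j; rewrite (ord1 i) mxE.
by apply/eqP; apply/negPn/negP => hne; apply: h; exists j.
Qed.

Lemma nondeg n (K : 'I_n -> 'I_n -> R) (a b : 'I_n -> R) mu om :
  om != 0 ->
  (forall k, \sum_j K k j * a j = mu * a k - om * b k) ->
  (forall k, \sum_j K k j * b j = om * a k + mu * b k) ->
  \sum_k (a k ^+ 2 + b k ^+ 2) = 1 ->
  (\sum_k a k * b k) ^+ 2 < (\sum_k a k ^+ 2) * (\sum_k b k ^+ 2).
Proof.
move=> om0 hA hB h1; rewrite ltNge; apply/negP => hle.
have L0 : \sum_k \sum_l (a k * b l - a l * b k) ^+ 2 = 0.
  apply/eqP; rewrite eq_le; apply/andP; split.
    by rewrite lagrange_id; lra.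
  by apply: sumr_ge0 => k _; apply: sumr_ge0 => l _; apply: sqr_ge0.
have Z : forall k l, a k * b l - a l * b k = 0.
  move=> k l; apply/eqP; rewrite -sqrf_eq0; apply/eqP.
  have h1k : \sum_l (a k * b l - a l * b k) ^+ 2 = 0.
    apply: (psumr_eq0P _ L0) => // i _; apply: sumr_ge0 => j _; exact: sqr_ge0.
  by apply: (psumr_eq0P _ h1k) => // i _; exact: sqr_ge0.
have Zk : forall k, a k ^+ 2 + b k ^+ 2 = 0.
  move=> k.
  have : om * (a k ^+ 2 + b k ^+ 2) = a k * (\sum_j K k j * b j) - b k * (\sum_j K k j * a j).
    by rewrite hA hB; ring.
  rewrite !mulr_sumr -sumrB big1.
    by move/eqP; rewrite mulf_eq0 (negbTE om0) /= => /eqP.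
  move=> j _; have := Z k j; have -> : a k * (K k j * b j) - b k * (K k j * a j) =
    K k j * (a k * b j - a j * b k) by ring.
  by move=> ->; rewrite mulr0.
have : \sum_k (a k ^+ 2 + b k ^+ 2) = 0 by apply: big1 => i _; exact: Zk.
by rewrite h1 => /eqP; rewrite oner_eq0.
Qed.

Lemma time_sums n (a b : 'I_n -> R) x y :
  [/\ \sum_k (x * a k - y * b k) ^+ 2 =
        x ^+ 2 * \sum_k a k ^+ 2 - 2 * x * y * \sum_k a k * b k + y ^+ 2 * \sum_k b k ^+ 2,
      \sum_k (x * a k - y * b k) * (y * a k + x * b k) =
        x * y * \sum_k a k ^+ 2 + (x ^+ 2 - y ^+ 2) * \sum_k a k * b k - x * y * \sum_k b k ^+ 2 &
      \sum_k (y * a k + x * b k) ^+ 2 =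
        y ^+ 2 * \sum_k a k ^+ 2 + 2 * x * y * \sum_k a k * b k + x ^+ 2 * \sum_k b k ^+ 2].
Proof.
split.
- transitivity (\sum_k (x ^+ 2 * a k ^+ 2 + (- 2 * x * y) * (a k * b k) + y ^+ 2 * b k ^+ 2)).
    by apply: eq_bigr => k _; ring.
  rewrite sum_comb3; ring.
- transitivity (\sum_k ((x * y) * a k ^+ 2 + (x ^+ 2 - y ^+ 2) * (a k * b k) + (- (x * y)) * b k ^+ 2)).
    by apply: eq_bigr => k _; ring.
  rewrite sum_comb3; ring.
- transitivity (\sum_k (y ^+ 2 * a k ^+ 2 + (2 * x * y) * (a k * b k) + x ^+ 2 * b k ^+ 2)).
    by apply: eq_bigr => k _; ring.
  rewrite sum_comb3; ring.
Qed.

Section R1.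
Variables (n : nat) (c d : 'I_n -> R).
Local Notation M := (\matrix_(i < 2, j < n) (if i == ord0 then c j else d j)).

Lemma R1_norm (u : 'cV[R]_n) : rnorm2 (M *m u) =
  Num.sqrt ((\sum_l c l * u l ord0) ^+ 2 + (\sum_l d l * u l ord0) ^+ 2).
Proof.
rewrite rnorm2_col big_ord_recl big_ord1 !mxE; congr (Num.sqrt (_ ^+ 2 + _ ^+ 2)).
  by apply: eq_bigr => l _; rewrite mxE.
by apply: eq_bigr => l _; rewrite mxE.
Qed.

Lemma R1_eig (th s : R) :
  M *m M^T *m (\col_(i < 2) (if i == ord0 then cos th else sin th)) =
    s *: (\col_(i < 2) (if i == ord0 then cos th else sin th)) ->
  (\sum_l c l ^+ 2) * cos th + (\sum_l c l * d l) * sin th = s * cos th /\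
  (\sum_l c l * d l) * cos th + (\sum_l d l ^+ 2) * sin th = s * sin th.
Proof.
move=> h.
have h0 := congr1 (fun X : 'cV[R]_2 => X ord0 ord0) h.
have h1 := congr1 (fun X : 'cV[R]_2 => X (lift ord0 ord0) ord0) h.
move: h0 h1 => /=; rewrite !mxE !big_ord_recl !big_ord0 !addr0 !mxE /=.
have m00 : \sum_j M ord0 j * M^T j ord0 = \sum_l c l ^+ 2.
  by apply: eq_bigr => j _; rewrite !mxE expr2.
have m01 : \sum_j M ord0 j * M^T j (lift ord0 ord0) = \sum_l c l * d l.
  by apply: eq_bigr => j _; rewrite !mxE.
have m10 : \sum_j M (lift ord0 ord0) j * M^T j ord0 = \sum_l c l * d l.
  by apply: eq_bigr => j _; rewrite !mxE /= mulrC.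
have m11 : \sum_j M (lift ord0 ord0) j * M^T j (lift ord0 ord0) = \sum_l d l ^+ 2.
  by apply: eq_bigr => j _; rewrite !mxE /= expr2.
by rewrite m00 m01 m10 m11 => -> ->.
Qed.

Lemma lambda_det (th W : R) :
  (\sum_l c l ^+ 2) + (\sum_l d l ^+ 2) = 1 ->
  W = Num.sqrt (((\sum_l c l ^+ 2) - (\sum_l d l ^+ 2)) ^+ 2 + (2 * (\sum_l c l * d l)) ^+ 2) ->
  W < 1 ->
  (\sum_l c l ^+ 2) * cos th + (\sum_l c l * d l) * sin th = specnorm M ^+ 2 * cos th ->
  (\sum_l c l * d l) * cos th + (\sum_l d l ^+ 2) * sin th = specnorm M ^+ 2 * sin th ->
  specnorm M ^+ 2 = (1 + W) / 2.
Proof.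
have [cc hcc] : exists cc, cc = \sum_l c l ^+ 2 by eexists.
have [cd hcd] : exists cd, cd = \sum_l c l * d l by eexists.
have [dd hdd] : exists dd, dd = \sum_l d l ^+ 2 by eexists.
have [sg hsg] : exists sg, sg = specnorm M by eexists.
rewrite -hcc -hcd -hdd -hsg => hN hW W1 e1 e2.
have cs1 := cos2Dsin2 th.
have [l hl] : exists l, l = sg ^+ 2 by eexists.
rewrite -hl in e1 e2 *.
have hdet : (cc - l) * (dd - l) - cd ^+ 2 = 0.
  have -> : (cc - l) * (dd - l) - cd ^+ 2 = ((cc - l) * (dd - l) - cd ^+ 2) * (cos th ^+ 2 + sin th ^+ 2)
    by rewrite cs1 mulr1.
  have -> : ((cc - l) * (dd - l) - cd ^+ 2) * (cos th ^+ 2 + sin th ^+ 2) =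
    cos th * ((dd - l) * ((cc * cos th + cd * sin th) - l * cos th) - cd * ((cd * cos th + dd * sin th) - l * sin th))
    + sin th * ((cc - l) * ((cd * cos th + dd * sin th) - l * sin th) - cd * ((cc * cos th + cd * sin th) - l * cos th))
    by ring.
  by rewrite e1 e2 !subrr !mulr0 subrr !mulr0 addr0.
have W0 : 0 <= W by rewrite hW sqrtr_ge0.
have W2 : W ^+ 2 = (cc - dd) ^+ 2 + (2 * cd) ^+ 2.
  by rewrite hW sqr_sqrtr // addr_ge0 // sqr_ge0.
have hsq : (2 * l - 1) ^+ 2 = W ^+ 2.
  have hd : dd = 1 - cc by lra.
  rewrite W2 hd; rewrite hd in hdet; nra.
have l0 : 0 < l by nra.
have l1 : l < 1 by nra.
have hhalf : 1 / 2 <= l.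
  have hub : forall u : 'cV[R]_n, rnorm2 u = 1 -> rnorm2 (M *m u) <= 1.
    move=> u hu; rewrite R1_norm -sqrtr1 ler_sqrt // .
    have h1 := @CS_unit _ _ c d u hu 1 0.
    have h2 := @CS_unit _ _ c d u hu 0 1.
    rewrite -hcc -hcd -hdd in h1 h2.
    move: h1 h2; set x := \sum_l _; set y := \sum_l _ => h1 h2.
    have h1' : x ^+ 2 <= cc.
      move: h1; have -> : (1 * x + 0 * y) = x by ring.
      by have -> : (1 ^+ 2 * cc + 2 * 1 * 0 * cd + 0 ^+ 2 * dd) * 1 = cc by ring.
    have h2' : y ^+ 2 <= dd.
      move: h2; have -> : (0 * x + 1 * y) = y by ring.
      by have -> : (0 ^+ 2 * cc + 2 * 0 * 1 * cd + 1 ^+ 2 * dd) * 1 = dd by ring.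
    lra.
  have e3 := @minv_e3 _ (cos th) (sin th) l cc cd dd cs1 hN e1 e2 l0 l1.
  have e4 := @minv_e4 _ (cos th) (sin th) l cc cd dd cs1 hN e1 e2 l0 l1.
  have hN2 : (- sin th) ^+ 2 * cc + 2 * (- sin th) * cos th * cd + cos th ^+ 2 * dd = 1 - l.
    have -> : (- sin th) ^+ 2 * cc + 2 * (- sin th) * cos th * cd + cos th ^+ 2 * dd =
       - sin th * (cd * cos th - cc * sin th) + cos th * (cd * (- sin th) + dd * cos th) by ring.
    by rewrite e3 e4 -[RHS]mulr1 -cs1; ring.
  have l2p : 0 < 1 - l by lra.
  have := @unit_vec _ n c d (- sin th) (cos th); rewrite -hcc -hcd -hdd hN2 => /(_ l2p).
  case=> u [hu hx hy].
  have hlow : Num.sqrt (1 - l) <= rnorm2 (M *m u).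
    rewrite R1_norm hx hy.
    have -> : - sin th * cc + cos th * cd = - (1 - l) * sin th by rewrite -e3; ring.
    have -> : - sin th * cd + cos th * dd = (1 - l) * cos th by rewrite -e4; ring.
    rewrite ler_sqrt; last by apply: addr_ge0; apply: sqr_ge0.
    rewrite !expr_div_n (sqr_sqrtr (ltW l2p)) -mulrDl.
    have -> : (- (1 - l) * sin th) ^+ 2 + ((1 - l) * cos th) ^+ 2 = (1 - l) ^+ 2 by
      rewrite -[RHS]mulr1 -cs1; ring.
    by rewrite expr2 mulfK ?gt_eqF.
  have := @specnorm_bounds _ _ _ M (Num.sqrt (1 - l)) 1 hub.
  case/(_ _)/andP; first by exists u.
  rewrite -hsg => hs _.
  have := sqrtr_ge0 (1 - l); have := sqr_sqrtr (ltW l2p).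
  move=> h1 h2; rewrite hl; nra.
have h : (2 * l - 1 - W) * (2 * l - 1 + W) = 0 by rewrite -subr_sqr hsq subrr.
move/eqP: h; rewrite mulf_eq0 => /orP[] /eqP h; lra.
Qed.
End R1.
End H5.


Section H6.
Variable R : realType.

Lemma all3 n (c d P Q : 'I_n -> R) (Th : 'M[R]_n) (th l1 V W g : R) :
  (\sum_l c l ^+ 2) + (\sum_l d l ^+ 2) = 1 -> 0 <= W -> W < 1 -> l1 = (1 + W) / 2 ->
  (\sum_l c l ^+ 2) * cos th + (\sum_l c l * d l) * sin th = l1 * cos th ->
  (\sum_l c l * d l) * cos th + (\sum_l d l ^+ 2) * sin th = l1 * sin th ->
  (\sum_k P k ^+ 2) + (\sum_k Q k ^+ 2) = 1 ->
  V ^+ 2 = ((\sum_k P k ^+ 2) - (\sum_k Q k ^+ 2)) ^+ 2 + (2 * (\sum_k P k * Q k)) ^+ 2 ->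
  0 <= V -> V < 1 ->
  (forall k l, Th k l = P k * c l - Q k * d l) ->
  let D := Fq (\sum_k P k ^+ 2) (\sum_k P k * Q k) (\sum_k Q k ^+ 2) (cos g) (sin g) in
  let S1 := ((\sum_k P k ^+ 2) - (\sum_k Q k ^+ 2)) * (cos th ^+ 2 - sin th ^+ 2)
     - 2 * cos th * sin th * (2 * (\sum_k P k * Q k)) in
  [/\ a_min V W * Num.sqrt D <= specnorm Th <= a_max V W * Num.sqrt D,
      (1 - V) / 2 <= D,
      (cos th * cos g + sin th * sin g = 0 -> S1 = V -> a_max V W * Num.sqrt D <= specnorm Th) &
      (cos th * cos g + sin th * sin g = 0 -> S1 = - V -> specnorm Th <= a_min V W * Num.sqrt D)].
Proof.
move=> h1 h2 h3 h4 h5 h6 h7 h8 h9 h10 h11 D S1; split.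
- exact: (@MA _ n c d P Q Th th l1 V W _ _ _ _ _ _ erefl erefl erefl erefl erefl erefl h1 h2 h3 h4 h5 h6 h7 h8 h9 h10 h11 g).
- by have /andP[] := @D_bounds R V (\sum_k P k ^+ 2) (\sum_k P k * Q k) (\sum_k Q k ^+ 2) h7 h8 h9 g.
- exact: (@MS_max _ n c d P Q Th th l1 V W _ _ _ _ _ _ erefl erefl erefl erefl erefl erefl h1 h2 h3 h4 h5 h6 h7 h8 h9 h10 h11 g).
- exact: (@MS_min _ n c d P Q Th th l1 V W _ _ _ _ _ _ erefl erefl erefl erefl erefl erefl h1 h2 h3 h4 h5 h6 h7 h8 h9 h10 h11 g).
Qed.
End H6.


Arguments col_nz {R n}.
Arguments row_nz {R n}.
Arguments sum_pos {R n}.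
Arguments normalize {R n}.
Arguments nondeg {R n}.
Arguments time_sums {R n}.
Arguments R1_eig {R n}.
Arguments lambda_det {R n}.
Arguments all3 {R n}.
Arguments cos_odd_pihalf {R}.
Arguments angle_exists {R}.

Lemma ReM (R : realType) (x y : R[i]) :
  complex.Re (x * y) = complex.Re x * complex.Re y - complex.Im x * complex.Im y.
Proof. by case: x => ? ?; case: y => ? ?. Qed.
Lemma ImM (R : realType) (x y : R[i]) :
  complex.Im (x * y) = complex.Re x * complex.Im y + complex.Im x * complex.Re y.
Proof. by case: x => ? ?; case: y => ? ?. Qed.

Theorem theorem10 (R : realType) (n : nat) (A : 'M[R]_n) (lam : R[i])
  (w : 'rV[R[i]]_n) (v : 'cV[R[i]]_n) (y0 : 'cV[R]_n)
  (alpha beta : 'I_n -> R) (gam theta : R) :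
  Lambda1_complex A lam ->
  w != 0 -> w *m cplx_mx A = lam *: w ->
  v != 0 -> cplx_mx A *m v = lam *: v ->
  let om := complex.Im lam in
  let wh := (Complex (cnorm2 w)^-1 0) *: w in
  let vh := (Complex (cnorm2 v)^-1 0) *: v in
  let yh := (rnorm2 y0)^-1 *: y0 in
  let V1 := cmod ((vh^T *m vh) ord0 ord0) in
  let W1 := cmod ((wh *m wh^T) ord0 ord0) in
  (w *m cplx_mx y0) ord0 ord0 != 0 ->
  (* polar forms of vh_k, wh_l and wh*yh *)
  (forall k, vh k ord0 = Complex (cmod (vh k ord0)) 0 * expi (alpha k)) ->
  (forall l, wh ord0 l = Complex (cmod (wh ord0 l)) 0 * expi (beta l)) ->
  (wh *m cplx_mx yh) ord0 ord0
    = Complex (cmod ((wh *m cplx_mx yh) ord0 ord0)) 0 * expi gam ->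
  (* theta: angle of the left singular vector of R1 for its largest
     singular value sigma1 *)
  let R1 : 'M[R]_(2, n) :=
    \matrix_(i < 2, j < n) (if i == ord0 then complex.Re (wh ord0 j) else complex.Im (wh ord0 j)) in
  let sigma1 := specnorm R1 in
  let a1 : 'cV[R]_2 := \col_(i < 2) (if i == ord0 then cos theta else sin theta) in
  R1 *m R1^T *m a1 = sigma1 ^+ 2 *: a1 ->
  let Theta_u (t : R) : 'cV[R]_n :=
    \col_(k < n) (cmod (vh k ord0) * cos (om * t + alpha k + gam)) in
  let Theta (t : R) : 'M[R]_n :=
    \matrix_(k < n, l < n)
      (cmod (vh k ord0) * cmod (wh ord0 l) * cos (om * t + alpha k + beta l)) in
  let OT (t : R) := specnorm (Theta t) / rnorm2 (Theta_u t) in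
  (forall t, a_min V1 W1 <= OT t <= a_max V1 W1) /\
  ((exists k : int, gam - theta = (2 * k + 1)%:~R * (pi / 2)) ->
     (exists t, OT t = a_min V1 W1) /\ (exists t, OT t = a_max V1 W1)).
Proof.
move=> hL wn0 hw vn0 hv om wh vh yh V1 W1 hwy halpha hbeta hgam R1 sigma1 a1 heig Theta_u Theta OT.
case: hL => _ omp _ _ _.
have [k0 hk0] := col_nz v vn0.
have [Sv hSv] : exists Sv, Sv = \sum_k (complex.Re (v k ord0) ^+ 2 + complex.Im (v k ord0) ^+ 2) by eexists.
have Sv0 : 0 < Sv by rewrite hSv; exact: (sum_pos (fun k => v k ord0) k0 hk0).
have hvh : forall k, vh k ord0 = Complex (Num.sqrt Sv)^-1 0 * v k ord0.
  by move=> k; rewrite /vh mxE cnorm2_col hSv.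
pose a := fun k => complex.Re (vh k ord0).
pose b := fun k => complex.Im (vh k ord0).
have nab : \sum_k (a k ^+ 2 + b k ^+ 2) = 1.
  rewrite /a /b; under eq_bigr => k _ do rewrite hvh.
  exact: (normalize (fun k => v k ord0) Sv hSv Sv0).
have [l0 hl0] := row_nz w wn0.
have [Sw hSw] : exists Sw, Sw = \sum_k (complex.Re (w ord0 k) ^+ 2 + complex.Im (w ord0 k) ^+ 2) by eexists.
have Sw0 : 0 < Sw by rewrite hSw; exact: (sum_pos (fun k => w ord0 k) l0 hl0).
have hwh : forall k, wh ord0 k = Complex (Num.sqrt Sw)^-1 0 * w ord0 k.
  by move=> k; rewrite /wh mxE cnorm2_row hSw.
pose c := fun k => complex.Re (wh ord0 k).
pose d := fun k => complex.Im (wh ord0 k).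
have ncd : \sum_k (c k ^+ 2 + d k ^+ 2) = 1.
  rewrite /c /d; under eq_bigr => k _ do rewrite hwh.
  exact: (normalize (fun k => w ord0 k) Sw hSw Sw0).
have hvA : cplx_mx A *m vh = lam *: vh by rewrite /vh -scalemxAr hv !scalerA mulrC.
have hwA : wh *m cplx_mx A = lam *: wh by rewrite /wh -scalemxAl hw !scalerA mulrC.
have hcA : forall k j, cplx_mx A k j = Complex (A k j) 0 by move=> *; rewrite /cplx_mx mxE.
have hAab : forall k, \sum_j A k j * a j = complex.Re lam * a k - complex.Im lam * b k /\
    \sum_j A k j * b j = complex.Im lam * a k + complex.Re lam * b k.
  move=> k; have := congr1 (fun X : 'cV[R[i]]_n => X k ord0) hvA; rewrite /= [LHS]mxE [RHS]mxE => h.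
  split.
    have := congr1 (@complex.Re R) h; rewrite Re_sum ReM => <-.
    by apply: eq_bigr => j _; rewrite hcA ReCmul.
  have := congr1 (@complex.Im R) h; rewrite Im_sum ImM => hh.
  rewrite addrC -hh; apply: eq_bigr => j _; by rewrite hcA ImCmul.
have hAcd : forall l, \sum_j A j l * c j = complex.Re lam * c l - complex.Im lam * d l /\
    \sum_j A j l * d j = complex.Im lam * c l + complex.Re lam * d l.
  move=> l; have := congr1 (fun X : 'rV[R[i]]_n => X ord0 l) hwA; rewrite /= [LHS]mxE [RHS]mxE => h.
  split.
    have := congr1 (@complex.Re R) h; rewrite Re_sum ReM => <-.
    by apply: eq_bigr => j _; rewrite hcA ReCmulr mulrC.
  have := congr1 (@complex.Im R) h; rewrite Im_sum ImM => hh.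
  rewrite addrC -hh; apply: eq_bigr => j _; by rewrite hcA ImCmulr mulrC.
have omn : complex.Im lam != 0 by rewrite gt_eqF.
have ndv := nondeg (fun k j => A k j) a b (complex.Re lam) (complex.Im lam) omn
   (fun k => proj1 (hAab k)) (fun k => proj2 (hAab k)) nab.
have ndw := nondeg (fun l j => A j l) c d (complex.Re lam) (complex.Im lam) omn
   (fun k => proj1 (hAcd k)) (fun k => proj2 (hAcd k)) ncd.
have hV1 : V1 = Num.sqrt (((\sum_k a k ^+ 2) - (\sum_k b k ^+ 2)) ^+ 2 + (2 * \sum_k a k * b k) ^+ 2).
  rewrite /V1 /cmod; congr (Num.sqrt (_ ^+ 2 + _ ^+ 2)).
    rewrite mxE Re_sum -sumrB; apply: eq_bigr => k _; rewrite [vh^T _ _]mxE ReM.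
    by rewrite !expr2.
  rewrite mxE Im_sum mulr_sumr; apply: eq_bigr => k _; rewrite [vh^T _ _]mxE ImM.
  rewrite /a /b; ring.
have hW1 : W1 = Num.sqrt (((\sum_k c k ^+ 2) - (\sum_k d k ^+ 2)) ^+ 2 + (2 * \sum_k c k * d k) ^+ 2).
  rewrite /W1 /cmod; congr (Num.sqrt (_ ^+ 2 + _ ^+ 2)).
    rewrite mxE Re_sum -sumrB; apply: eq_bigr => k _; rewrite [wh^T _ _]mxE ReM.
    by rewrite !expr2.
  rewrite mxE Im_sum mulr_sumr; apply: eq_bigr => k _; rewrite [wh^T _ _]mxE ImM.
  rewrite /c /d; ring.
have nab' : (\sum_k a k ^+ 2) + (\sum_k b k ^+ 2) = 1 by rewrite -big_split.
have ncd' : (\sum_k c k ^+ 2) + (\sum_k d k ^+ 2) = 1 by rewrite -big_split.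
have V10 : 0 <= V1 by rewrite hV1 sqrtr_ge0.
have W10 : 0 <= W1 by rewrite hW1 sqrtr_ge0.
have V1lt : V1 < 1.
  have h2 : V1 ^+ 2 < 1.
    rewrite hV1 sqr_sqrtr; last by apply: addr_ge0; apply: sqr_ge0.
    move: ndv nab'; nra.
  nra.
have W1lt : W1 < 1.
  have h2 : W1 ^+ 2 < 1.
    rewrite hW1 sqr_sqrtr; last by apply: addr_ge0; apply: sqr_ge0.
    move: ndw ncd'; nra.
  nra.
have [e1 e2] := R1_eig c d theta (sigma1 ^+ 2) heig.
have hl1 := lambda_det c d theta W1 ncd' hW1 W1lt e1 e2.
have ha : forall k, a k = cmod (vh k ord0) * cos (alpha k).
  by move=> k; rewrite /a {1}halpha ReCmul.
have hb : forall k, b k = cmod (vh k ord0) * sin (alpha k).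
  by move=> k; rewrite /b {1}halpha ImCmul.
have hc : forall l, c l = cmod (wh ord0 l) * cos (beta l).
  by move=> l; rewrite /c {1}hbeta ReCmul.
have hd : forall l, d l = cmod (wh ord0 l) * sin (beta l).
  by move=> l; rewrite /d {1}hbeta ImCmul.
have per : forall t,
  [/\ a_min V1 W1 <= OT t <= a_max V1 W1,
   (cos theta * cos gam + sin theta * sin gam = 0 ->
     ((cos theta * cos (om * t) - sin theta * sin (om * t)) ^+ 2
       - (sin theta * cos (om * t) + cos theta * sin (om * t)) ^+ 2)
       * ((\sum_k a k ^+ 2) - (\sum_k b k ^+ 2))
     - 2 * (cos theta * cos (om * t) - sin theta * sin (om * t))
         * (sin theta * cos (om * t) + cos theta * sin (om * t)) * (2 * \sum_k a k * b k) = V1 ->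
     OT t = a_max V1 W1) &
   (cos theta * cos gam + sin theta * sin gam = 0 ->
     ((cos theta * cos (om * t) - sin theta * sin (om * t)) ^+ 2
       - (sin theta * cos (om * t) + cos theta * sin (om * t)) ^+ 2)
       * ((\sum_k a k ^+ 2) - (\sum_k b k ^+ 2))
     - 2 * (cos theta * cos (om * t) - sin theta * sin (om * t))
         * (sin theta * cos (om * t) + cos theta * sin (om * t)) * (2 * \sum_k a k * b k) = - V1 ->
     OT t = a_min V1 W1)].
  move=> t.
  have cs := cos2Dsin2 (om * t).
  have [s1 s2 s3] := time_sums a b (cos (om * t)) (sin (om * t)).
  have h7 : \sum_k (cos (om * t) * a k - sin (om * t) * b k) ^+ 2 +
            \sum_k (sin (om * t) * a k + cos (om * t) * b k) ^+ 2 = 1.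
    rewrite s1 s3.
    have -> : (1 : R) = (cos (om * t) ^+ 2 + sin (om * t) ^+ 2) *
       ((\sum_k a k ^+ 2) + (\sum_k b k ^+ 2)) by rewrite cs nab' mulr1.
    ring.
  have h8 : V1 ^+ 2 = ((\sum_k (cos (om * t) * a k - sin (om * t) * b k) ^+ 2) -
            (\sum_k (sin (om * t) * a k + cos (om * t) * b k) ^+ 2)) ^+ 2 +
     (2 * \sum_k (cos (om * t) * a k - sin (om * t) * b k) * (sin (om * t) * a k + cos (om * t) * b k)) ^+ 2.
    rewrite s1 s2 s3 hV1 sqr_sqrtr; last by apply: addr_ge0; apply: sqr_ge0.
    have -> : ((\sum_k a k ^+ 2) - (\sum_k b k ^+ 2)) ^+ 2 + (2 * \sum_k a k * b k) ^+ 2 =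
      (((\sum_k a k ^+ 2) - (\sum_k b k ^+ 2)) ^+ 2 + (2 * \sum_k a k * b k) ^+ 2) *
      (cos (om * t) ^+ 2 + sin (om * t) ^+ 2) ^+ 2 by rewrite cs expr1n mulr1.
    ring.
  have hT : forall k l, Theta t k l = (cos (om * t) * a k - sin (om * t) * b k) * c l
                   - (sin (om * t) * a k + cos (om * t) * b k) * d l.
    move=> k l; rewrite /Theta mxE ha hb hc hd cosD cosD sinD; ring.
  have := all3 c d (fun k => cos (om * t) * a k - sin (om * t) * b k)
    (fun k => sin (om * t) * a k + cos (om * t) * b k) (Theta t) theta (sigma1 ^+ 2) V1 W1 gam
    ncd' W10 W1lt hl1 e1 e2 h7 h8 V10 V1lt hT.
  move=> H; move: H; cbv zeta; move=> [hB hDpos hmax hmin].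
  set D := Fq _ _ _ (cos gam) (sin gam) in hB hDpos hmax hmin.
  have hU : rnorm2 (Theta_u t) = Num.sqrt D.
    rewrite rnorm2_col /D; congr Num.sqrt.
    transitivity (\sum_k ((cos (om * t) * a k - sin (om * t) * b k) * cos gam
       - (sin (om * t) * a k + cos (om * t) * b k) * sin gam) ^+ 2).
      by apply: eq_bigr => k _; rewrite /Theta_u mxE ha hb cosD cosD sinD; congr (_ ^+ 2); ring.
    rewrite quad_sum /Fq; ring.
  have D0 : 0 < D by lra.
  have sD : 0 < Num.sqrt D by rewrite sqrtr_gt0.
  split.
  - rewrite /OT hU ler_pdivlMr // ler_pdivrMr //.
  - move=> hp0 hS.
    have h1 : a_max V1 W1 * Num.sqrt D <= specnorm (Theta t).
      apply: hmax => //; rewrite s1 s2 s3 -hS; ring.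
    have heq : specnorm (Theta t) = a_max V1 W1 * Num.sqrt D.
      by apply/eqP; rewrite eq_le h1 andbT; case/andP: hB.
    by rewrite /OT hU heq mulfK // gt_eqF.
  - move=> hp0 hS.
    have h1 : specnorm (Theta t) <= a_min V1 W1 * Num.sqrt D.
      apply: hmin => //; rewrite s1 s2 s3 -hS; ring.
    have heq : specnorm (Theta t) = a_min V1 W1 * Num.sqrt D.
      by apply/eqP; rewrite eq_le h1 /=; case/andP: hB.
    by rewrite /OT hU heq mulfK // gt_eqF.
split; first by move=> t; case: (per t).
move=> [k hk].
have hp0 : cos theta * cos gam + sin theta * sin gam = 0.
  have h : cos (gam - theta) = 0 by rewrite hk; exact: cos_odd_pihalf.
  move: h; rewrite cosB => h.
  by rewrite [cos theta * _]mulrC [sin theta * _]mulrC.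
have hVs : V1 ^+ 2 = ((\sum_k a k ^+ 2) - (\sum_k b k ^+ 2)) ^+ 2 + (2 * \sum_k a k * b k) ^+ 2.
  by rewrite hV1 sqr_sqrtr // addr_ge0 // sqr_ge0.
have omn0 : om != 0 by rewrite /om gt_eqF.
have hex : forall sg : R, sg ^+ 2 = 1 -> exists t,
     ((cos theta * cos (om * t) - sin theta * sin (om * t)) ^+ 2
       - (sin theta * cos (om * t) + cos theta * sin (om * t)) ^+ 2)
       * ((\sum_k a k ^+ 2) - (\sum_k b k ^+ 2))
     - 2 * (cos theta * cos (om * t) - sin theta * sin (om * t))
         * (sin theta * cos (om * t) + cos theta * sin (om * t)) * (2 * \sum_k a k * b k) = sg * V1.
  move=> sg hsg.
  move: hVs; generalize (\sum_k a k ^+ 2 - \sum_k b k ^+ 2) (2 * \sum_k a k * b k) => s1 s2 hVs.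
  case: (eqVneq V1 0) => hV0.
    exists 0; rewrite hV0 mulr0.
    have e1' : s1 = 0 by move: hVs; rewrite hV0; nra.
    have e2' : s2 = 0 by move: hVs; rewrite hV0; nra.
    by rewrite e1' e2' !mulr0 subr0.
  have Vp : 0 < V1 by rewrite lt_def hV0 V10.
  have [psi [hcp hsp]] : exists psi, cos psi = sg * s1 / V1 /\ sin psi = - (sg * s2 / V1).
    apply: angle_exists.
    rewrite sqrrN !expr_div_n !exprMn hsg !mul1r.
    have -> : s1 ^+ 2 = V1 ^+ 2 - s2 ^+ 2 by rewrite hVs; ring.
    by field; rewrite ?hV0.
  exists ((psi / 2 - theta) / om).
  have -> : om * ((psi / 2 - theta) / om) = psi / 2 - theta by field.
  have -> : cos theta * cos (psi / 2 - theta) - sin theta * sin (psi / 2 - theta) = cos (psi / 2).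
    by rewrite -cosD addrC subrK.
  have -> : sin theta * cos (psi / 2 - theta) + cos theta * sin (psi / 2 - theta) = sin (psi / 2).
    by rewrite -sinD addrC subrK.
  have hc2 : cos (psi / 2) ^+ 2 - sin (psi / 2) ^+ 2 = cos psi.
    by rewrite {3}(splitr psi) cosD !expr2.
  have hs2 : 2 * cos (psi / 2) * sin (psi / 2) = sin psi.
    by rewrite {3}(splitr psi) sinD; ring.
  rewrite hc2 hs2 hcp hsp.
  have -> : sg * V1 = sg * (V1 ^+ 2) / V1 by rewrite expr2 mulrA mulfK.
  by rewrite hVs; field; rewrite ?hV0.
have [tmin hmin] := hex (-1) ltac:(by rewrite sqrrN expr1n).
have [tmax hmax] := hex 1 ltac:(by rewrite expr1n).
rewrite mulN1r in hmin; rewrite mul1r in hmax.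
split.
  by exists tmin; case: (per tmin) => _ _ h; exact: h hp0 hmin.
by exists tmax; case: (per tmax) => _ h _; exact: h hp0 hmax.
Qed.
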